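(* Let $R$ be a $d\times d$ expansive integer matrix, $B\subset\mathbb{Z}^d$ finite with $0\in B$, $N:=|B|$, $L\subset\mathbb{Z}^d$ finite with $0\in L$, and $(\alpha_l)_{l\in L}$ complex numbers. The following are equivalent: (i) the matrix $T=\frac{1}{\sqrt N}\left(e^{2\pi i (R^T)^{-1}l\cdot b}\alpha_l\right)_{l\in L,b\in B}$ has orthonormal columns; (ii) for every $t\in\mathbb{R}^d$, $\sum_{l\in L}|\alpha_l|^2\left|m_B((R^T)^{-1}(t-l))\right|^2=1$; (iii) the functions $\{\alpha_le_l: l\in L\}$ form a Parseval frame for $L^2(\delta_{R^{-1}B})$, where $\delta_{R^{-1}B}=\frac1N\sum_{b\in B}\delta_{R^{-1}b}$.
   Context: $e_\lambda(x)=e^{2\pi i\lambda\cdot x}$, $m_B(x)=\frac1N\sum_{b\in B}e^{2\pi ib\cdot x}$, $\delta_a$ is the Dirac measure at $a$. A family $\{f_i\}$ in a Hilbert space $H$ is a Parseval frame if $\sum_i|\langle v,f_i\rangle|^2=\|v\|^2$ for all $v\in H$. A matrix is expansive if all eigenvalues have modulus $>1$. *)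

(* Defs.v *)
From HB Require Import structures.
From mathcomp Require Import all_boot all_order all_algebra.
From mathcomp Require Import all_classical all_reals all_analysis.
From mathcomp Require Import complex.
Set Implicit Arguments. Unset Strict Implicit. Unset Printing Implicit Defensive.
Import Order.TTheory GRing.Theory Num.Theory.
Local Open Scope ring_scope.
Local Open Scope complex_scope.

Section Defs.
Variable R : realType.
Variable d : nat.

Definition intv (v : 'rV[int]_d) : 'rV[R]_d := map_mx (fun z : int => z%:~R) v.
Definition intm (A : 'M[int]_d) : 'M[R]_d := map_mx (fun z : int => z%:~R) A.

Definition dotR (x y : 'rV[R]_d) : R := \sum_(i < d) x 0 i * y 0 i.

Definition e2pi (x : R) : R[i] := (cos (2 * pi * x)) +i* (sin (2 * pi * x)).

Definition e_ (lam x : 'rV[R]_d) : R[i] := e2pi (dotR lam x).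

Definition expansive (A : 'M[int]_d) : Prop :=
  forall z : R[i], root (char_poly (map_mx (fun k : int => k%:~R) A)) z ->
    1 < `|z|.

Definition mB (B : seq 'rV[int]_d) (x : 'rV[R]_d) : R[i] :=
  (size B)%:R^-1 * \sum_(b <- B) e_ (intv b) x.

(* the matrix T = 1/sqrt N ( e^{2 pi i (R^T)^{-1} l . b} alpha_l )_{l in L, b in B};
   rows indexed by the enumeration of L, columns by that of B.
   As row vectors, (R^T)^{-1} l  is  l *m R^{-1}. *)
Definition Tmat (A : 'M[int]_d) (B L : seq 'rV[int]_d)
  (alpha : 'rV[int]_d -> R[i]) : 'M[R[i]]_(size L, size B) :=
  \matrix_(i < size L, j < size B)
    ((Num.sqrt ((size B)%:R : R))^-1%:C
      * e_ (intv (nth 0 L i) *m invmx (intm A)) (intv (nth 0 B j))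
      * alpha (nth 0 L i)).

Definition orthonormal_columns m n (T : 'M[R[i]]_(m, n)) : Prop :=
  (map_mx (fun z : R[i] => z^*) T)^T *m T = 1%:M.

(* inner product of L^2(delta_{R^{-1}B}),
   delta_{R^{-1}B} = 1/N sum_{b in B} delta_{R^{-1} b};
   as row vectors, R^{-1} b is  b *m (R^{-1})^T. *)
Definition ip_dB (A : 'M[int]_d) (B : seq 'rV[int]_d)
  (v w : 'rV[R]_d -> R[i]) : R[i] :=
  (size B)%:R^-1 *
    \sum_(b <- B) v (intv b *m (invmx (intm A))^T)
                  * (w (intv b *m (invmx (intm A))^T))^*.

Definition parseval_frame_dB (A : 'M[int]_d) (B L : seq 'rV[int]_d)
  (alpha : 'rV[int]_d -> R[i]) : Prop :=
  forall v : 'rV[R]_d -> R[i],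
    \sum_(l <- L) `|ip_dB A B v (fun x => alpha l * e_ (intv l) x)| ^+ 2
    = ip_dB A B v v.

End Defs.

(* Main.v *)
Require Import Defs.
From HB Require Import structures.
From mathcomp Require Import all_boot all_order all_algebra.
From mathcomp Require Import all_classical all_reals all_analysis.
From mathcomp Require Import complex.
From mathcomp Require Import ring lra.
Import Order.TTheory GRing.Theory Num.Theory.
Local Open Scope ring_scope.
Local Open Scope complex_scope.

Section S.
Variable R : realType.
Lemma e2piD (a b : R) : e2pi (a + b) = e2pi a * e2pi b.
Proof.
rewrite /e2pi mulrDr cosD sinD /=. congr (_ +i* _); ring.
Qed.
Lemma e2piN (a : R) : conjc (e2pi a) = e2pi (- a).
Proof. by rewrite /e2pi /= mulrN cosN sinN. Qed.
Lemma e2pi0 : e2pi (0:R) = 1.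
Proof. by rewrite /e2pi mulr0 cos0 sin0. Qed.
Lemma e2pi_half : e2pi (2^-1 : R) = -1.
Proof. rewrite /e2pi (_ : 2 * pi * 2^-1 = pi); last by field. rewrite cospi sinpi. by apply/eqP; rewrite eq_complex /= oppr0 !eqxx. Qed.
Lemma e2piJ (a : R) : e2pi a * conjc (e2pi a) = 1.
Proof. rewrite /e2pi /=. congr (_ +i* _); last by ring.
by rewrite mulrN opprK -!expr2 cos2Dsin2. Qed.
Lemma normsq (z : R[i]) : `|z| ^+ 2 = z * conjc z.
Proof. by rewrite normcE sqr_sqrtc. Qed.
Variable d : nat.
Implicit Types x y z : 'rV[R]_d.
Lemma dotRE x y : dotR x y = (x *m y^T) 0 0.
Proof. by rewrite /dotR !mxE; apply: eq_bigr => i _; rewrite !mxE. Qed.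
Lemma dotRC x y : dotR x y = dotR y x.
Proof. by rewrite /dotR; apply: eq_bigr => i _; rewrite mulrC. Qed.
Lemma dotRDr x y z : dotR x (y + z) = dotR x y + dotR x z.
Proof. by rewrite !dotRE linearD /= mulmxDr mxE. Qed.
Lemma dotRNr x y : dotR x (- y) = - dotR x y.
Proof. by rewrite !dotRE linearN /= mulmxN mxE. Qed.
Lemma dotRBr x y z : dotR x (y - z) = dotR x y - dotR x z.
Proof. by rewrite dotRDr dotRNr. Qed.
Lemma dotRDl x y z : dotR (y + z) x = dotR y x + dotR z x.
Proof. by rewrite dotRC dotRDr !(dotRC x). Qed.
Lemma dotRBl x y z : dotR (y - z) x = dotR y x - dotR z x.
Proof. by rewrite dotRC dotRBr !(dotRC x). Qed.
Lemma dotRZl a x y : dotR (a *: x) y = a * dotR x y.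
Proof. by rewrite !dotRE -scalemxAl mxE. Qed.
Lemma dotR0l x : dotR 0 x = 0.
Proof. by rewrite dotRE mul0mx mxE. Qed.
Lemma dotRmx x y (M : 'M[R]_d) : dotR x (y *m M) = dotR (x *m M^T) y.
Proof. by rewrite !dotRE trmx_mul mulmxA. Qed.
Lemma dotR_ge0 x : 0 <= dotR x x.
Proof. by apply: sumr_ge0 => i _; rewrite -expr2 sqr_ge0. Qed.
Lemma dotR_eq0 x : dotR x x = 0 -> x = 0.
Proof.
move=> /eqP; rewrite psumr_eq0; last by move=> i _; rewrite -expr2 sqr_ge0.
move=> /allP H; apply/rowP => i; rewrite mxE.
have := H i (mem_index_enum i); rewrite -expr2 sqrf_eq0 /=; by move/eqP.
Qed.
Lemma e2pi_neq0 (a : R) : e2pi a != 0.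
Proof. apply/negP => /eqP H; have := e2piJ a; rewrite H mul0r => /eqP; by rewrite eq_sym oner_eq0. Qed.
Lemma dotR0r x : dotR x 0 = 0.
Proof. by rewrite dotRC dotR0l. Qed.

Lemma lin_indep n (I : finType) (P : {pred I}) (c : I -> R[i]) (w : I -> 'rV[R]_d) :
  (#|P| <= n)%N ->
  (forall t, \sum_(i in P) c i * e2pi (dotR (w i) t) = 0) ->
  forall i0, i0 \in P -> \sum_(i in P | w i == w i0) c i = 0.
Proof.
elim: n P c => [|n IH] P c.
  by rewrite leqn0 => /eqP/card0_eq P0 _ i0; rewrite P0.
move=> cardP H i0 Pi0.
case: (pickP [pred i | (i \in P) && (w i != w i0)]) => [i1 /= /andP [Pi1 wi1] | allw]; last first.
  rewrite -[RHS](H 0) big_mkcondr /=; apply: eq_bigr => i Pi.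
  have := allw i; rewrite /= Pi /= => /negbFE ->.
  by rewrite dotR0r e2pi0 mulr1.
pose u := w i0 - w i1.
have uu : dotR u u != 0.
  apply/negP => /eqP /dotR_eq0 /eqP; rewrite subr_eq0 eq_sym; exact/negP.
pose h := (2 * dotR u u)^-1 *: u.
have uh : dotR u h = 2^-1.
  rewrite dotRC dotRZl invfM -mulrA mulVf //  mulr1 //.
pose c' := fun i => c i * (e2pi (dotR (w i) h) - e2pi (dotR (w i1) h)).
pose P' := [pred i | (i \in P) && (w i != w i1)].
have cardP' : (#|P'| <= n)%N.
  rewrite -ltnS; apply: leq_trans cardP; apply: proper_card.
  apply/properP; split; first by apply/fintype.subsetP => i /andP [].
  by exists i1 => //; rewrite inE /= eqxx andbF.
have H' : forall t, \sum_(i in P') c' i * e2pi (dotR (w i) t) = 0.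
  move=> t.
  transitivity (\sum_(i in P) c' i * e2pi (dotR (w i) t)).
    rewrite [RHS](bigID (fun i => w i == w i1)) /= [X in _ = X + _]big1 ?add0r.
      by apply: eq_bigl => i; rewrite inE.
    by move=> i /andP [_ /eqP wi]; rewrite /c' wi subrr mulr0 mul0r.
  transitivity (\sum_(i in P) c i * e2pi (dotR (w i) (t + h))
     - e2pi (dotR (w i1) h) * \sum_(i in P) c i * e2pi (dotR (w i) t)).
    rewrite mulr_sumr -sumrB; apply: eq_bigr => i _.
    by rewrite /c' dotRDr e2piD; ring.
  by rewrite !H mulr0 subrr.
have := IH P' c' cardP' H' i0.
rewrite inE /= Pi0 /=.
have -> : (w i0 != w i1) by rewrite eq_sym.
move=> /(_ isT).
have -> : \sum_(i in P' | w i == w i0) c' i =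
   (e2pi (dotR (w i0) h) - e2pi (dotR (w i1) h)) * \sum_(i in P | w i == w i0) c i.
  rewrite mulr_sumr; apply: eq_big => [i|i /andP [_ /eqP wi]].
    rewrite inE /=; case: (eqVneq (w i) (w i0)) => [->|]; rewrite ?andbF ?andbT //.
    by rewrite eq_sym (negbTE wi1) andbT.
  by rewrite /c' wi mulrC.
move=> /eqP; rewrite mulf_eq0 => /orP [|/eqP //].
have -> : w i0 = u + w i1 by rewrite /u subrK.
rewrite dotRDl uh e2piD e2pi_half mulN1r -opprD -mulr2n oppr_eq0 mulrn_eq0 /=.
by rewrite (negbTE (e2pi_neq0 _)).
Qed.
End S.

Lemma unitA (R : realType) d (A : 'M[int]_d) : expansive R A -> intm R A \in unitmx.
Proof.
move=> H.
have H0 : ~~ root (char_poly (map_mx (fun k : int => k%:~R) A : 'M[R[i]]_d)) 0.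
  by apply/negP => /H; rewrite normr0 ltr10.
move: H0; rewrite /root horner_coef0 char_poly_det mulf_eq0 negb_or => /andP [_].
rewrite (det_map_mx (intmul 1)) intr_eq0 => Hd.
by rewrite unitmxE /intm (det_map_mx (intmul 1)) unitfE intr_eq0.
Qed.

Section Gen.
Variable C : comNzRingType.
Lemma sum_delta n (F : 'I_n -> C) a : \sum_k (k == a)%:R * F k = F a.
Proof.
rewrite (bigD1 a) //= eqxx mul1r big1 ?addr0 // => k /negbTE ->; by rewrite mul0r.
Qed.
Lemma sum_deltaC n (F : 'I_n -> C) a : \sum_k F k * (a == k)%:R = F a.
Proof. transitivity (\sum_k (k == a)%:R * F k); last exact: sum_delta. apply: eq_bigr => k _; by rewrite mulrC eq_sym. Qed.
End Gen.

Lemma conjc_sum (R : realType) (I : Type) (r : seq I) (f : I -> R[i]) :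
  conjc (\sum_(i <- r) f i) = \sum_(i <- r) conjc (f i).
Proof. exact: rmorph_sum. Qed.
Lemma conjE (R : realType) (x : R[i]) : Num.conj x = conjc x.
Proof. by []. Qed.
Lemma conjcM (R : realType) (x y : R[i]) : conjc (x * y) = conjc x * conjc y.
Proof. exact: rmorphM. Qed.
Lemma conjcD (R : realType) (x y : R[i]) : conjc (x + y) = conjc x + conjc y.
Proof. exact: rmorphD. Qed.

Lemma sum2 (R : realType) n (F : 'I_n -> R[i]) a b z :
  \sum_k ((k == a)%:R + z * (k == b)%:R) * F k = F a + z * F b.
Proof.
rewrite (eq_bigr (fun k => (k == a)%:R * F k + z * ((k == b)%:R * F k))); last first.
  by move=> k _; rewrite mulrDl mulrA.
by rewrite big_split /= -mulr_sumr !sum_delta.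
Qed.

Lemma conj_i (R : realType) : conjc (Complex 0 1 : R[i]) = - Complex 0 1.
Proof. by apply/eqP; rewrite eq_complex /= oppr0 !eqxx. Qed.

Lemma polar (R : realType) n (H : 'I_n -> 'I_n -> R[i]) :
  (forall u : 'I_n -> R[i], \sum_j \sum_k u j * conjc (u k) * H j k = 0) ->
  forall a b, H a b = 0.
Proof.
move=> HQ.
have Q z a b : H a a + conjc z * H a b + z * H b a + z * conjc z * H b b = 0.
  rewrite -(HQ (fun j => (j == a)%:R + z * (j == b)%:R)).
  transitivity (\sum_j ((j == a)%:R + z * (j == b)%:R) *
                  (H j a + conjc z * H j b)); last first.
    apply: eq_bigr => j _; rewrite -sum2 mulr_sumr; apply: eq_bigr => k _.
    by rewrite conjcD conjcM !conjc_nat mulrA.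
  rewrite (@sum2 R n (fun j => H j a + conjc z * H j b)); ring.
have Hd a : H a a = 0.
  by have := Q 0 a a; rewrite conjc0 !mul0r !addr0.
move=> a b.
have e1 := Q 1 a b; rewrite conjc1 !mul1r (Hd a) (Hd b) add0r addr0 in e1.
have e2 := Q (Complex 0 1) a b; rewrite conj_i (Hd a) (Hd b) add0r mulr0 addr0 in e2.
have Hba : H b a = - H a b by apply/eqP; rewrite -addr_eq0 addrC e1.
rewrite Hba mulrN mulNr -opprD -mulr2n in e2.
move/eqP: e2; rewrite oppr_eq0 mulrn_eq0 /= mulf_eq0 => /orP [|/eqP //].
move=> /eqP /(congr1 (@complex.Im _)) /= /eqP; by rewrite oner_eq0.
Qed.

Section Main.
Variable R : realType.
Variable d : nat.
Variables (A : 'M[int]_d) (B L : seq 'rV[int]_d) (alpha : 'rV[int]_d -> R[i]).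
Hypothesis uA : intm R A \in unitmx.
Hypothesis uB : uniq B.
Hypothesis B0 : 0 \in B.
Local Notation N := (size B).
Local Notation M := (invmx (intm R A)).
Definition beta (j : 'I_N) := intv R (nth 0 B j).
Definition G (j k : 'I_N) := \sum_(l <- L) `|alpha l| ^+ 2 *
  e2pi (dotR (intv R l *m M) (beta k) - dotR (intv R l *m M) (beta j)).
Definition Cond := forall j k, G j k = N%:R * (j == k)%:R.

Lemma intv_inj : injective (@intv R d).
Proof.
move=> x y /matrixP H; apply/matrixP => i j; have := H i j; rewrite !mxE.
by move/eqP; rewrite eqr_int => /eqP.
Qed.
Lemma beta_inj : injective beta.
Proof.
move=> j k /intv_inj /eqP; rewrite nth_uniq // => /eqP; exact: val_inj.
Qed.
Lemma N_gt0 : (0 < N)%N.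
Proof. by case: B B0. Qed.
Lemma Nr_neq0 : (N%:R : R[i]) != 0.
Proof. by rewrite pnatr_eq0 -lt0n N_gt0. Qed.

Lemma Tentry (i : 'I_(size L)) (j : 'I_N) : Tmat A B L alpha i j =
  ((Num.sqrt (N%:R : R))^-1)%:C * e2pi (dotR (intv R (nth 0 L i) *m M) (beta j)) * alpha (nth 0 L i).
Proof. by rewrite mxE. Qed.

Lemma TtT0 j k :
  ((map_mx (fun z : R[i] => Num.conj z) (Tmat A B L alpha))^T *m Tmat A B L alpha) j k
  = \sum_i conjc (Tmat A B L alpha i j) * Tmat A B L alpha i k.
Proof. by rewrite mxE; apply: eq_bigr => i _; rewrite 2!mxE. Qed.

Lemma TtT_E j k :
  ((map_mx (fun z : R[i] => Num.conj z) (Tmat A B L alpha))^T *m Tmat A B L alpha) j k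
  = (N%:R)^-1 * G j k.
Proof.
rewrite TtT0 /G (big_nth 0) big_mkord mulr_sumr; apply: eq_bigr => i _.
rewrite !Tentry !conjcM conjc_real e2piN normsq [e2pi (_ - _)]e2piD.
set s := (Num.sqrt _)^-1.
have sC : s%:C * s%:C = (N%:R)^-1 :> R[i].
  rewrite -rmorphM /= -expr2 /s exprVn sqr_sqrtr ?ler0n //.
  by rewrite rmorphV ?unitfE ?pnatr_eq0 -?lt0n ?N_gt0 //= rmorph_nat.
rewrite -sC; ring.
Qed.

Lemma orth_iff : orthonormal_columns (Tmat A B L alpha) <-> Cond.
Proof.
split.
- move=> /matrixP H j k; have := H j k; rewrite TtT_E mxE => <-.
  by rewrite mulrA mulfV ?Nr_neq0 // mul1r.
- move=> HC; apply/matrixP => j k.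
  by rewrite TtT_E HC mxE mulrA mulVf ?Nr_neq0 // mul1r.
Qed.

Definition w (j k : 'I_N) := (beta j - beta k) *m M^T.

Lemma sumB (f : 'rV[int]_d -> R[i]) : \sum_(b <- B) f b = \sum_(j < N) f (nth 0 B j).
Proof. by rewrite (big_nth 0) big_mkord. Qed.

Lemma mBE x : `|mB B x| ^+ 2 = (N%:R^-1) ^+ 2 *
   \sum_j \sum_k e2pi (dotR (beta j) x - dotR (beta k) x).
Proof.
rewrite normsq /mB conjcM conjc_inv conjc_nat conjc_sum !sumB.
rewrite mulrACA -expr2; congr (_ * _).
rewrite mulr_suml; apply: eq_bigr => j _; rewrite mulr_sumr; apply: eq_bigr => k _.
by rewrite /e_ e2piN -e2piD.
Qed.

Lemma diffE (l : 'rV[int]_d) t j k :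
  dotR (beta j) ((t - intv R l) *m M) - dotR (beta k) ((t - intv R l) *m M) =
  dotR (w j k) t + (dotR (intv R l *m M) (beta k) - dotR (intv R l *m M) (beta j)).
Proof.
rewrite !dotRmx /w mulmxBl dotRBl !dotRBr.
rewrite !(@dotRC R d _ (intv R l)) !dotRmx trmxK.
ring.
Qed.

Lemma F_E t : \sum_(l <- L) `|alpha l| ^+ 2 * `|mB B ((t - intv R l) *m M)| ^+ 2
  = \sum_j \sum_k (N%:R^-1 ^+ 2 * G j k) * e2pi (dotR (w j k) t).
Proof.
transitivity (\sum_(l <- L) \sum_j \sum_k
  (`|alpha l|^+2 * N%:R^-1 ^+ 2 * e2pi (dotR (w j k) t) *
   e2pi (dotR (intv R l *m M) (beta k) - dotR (intv R l *m M) (beta j)))).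
  apply: eq_bigr => l _; rewrite mBE mulrA mulr_sumr; apply: eq_bigr => j _.
  rewrite mulr_sumr; apply: eq_bigr => k _.
  by rewrite diffE e2piD mulrA.
rewrite exchange_big; apply: eq_bigr => j _.
rewrite exchange_big; apply: eq_bigr => k _.
rewrite /G mulr_sumr mulr_suml; apply: eq_bigr => l _.
ring.
Qed.

Lemma Mt_unit : M^T \in unitmx.
Proof. by rewrite unitmx_tr unitmx_inv. Qed.

Lemma w_eq j k j' k' : w j k = w j' k' -> beta j - beta k = beta j' - beta k'.
Proof.
rewrite /w => /(congr1 (mulmx^~ (invmx M^T))).
by rewrite !mulmxK ?Mt_unit.
Qed.

Lemma G_diff j k j' k' : beta j - beta k = beta j' - beta k' -> G j k = G j' k'.
Proof.
move=> E; rewrite /G; apply: eq_bigr => l _; rewrite -!dotRBr.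
have -> : beta k - beta j = - (beta j - beta k) by rewrite opprB.
by rewrite E opprB.
Qed.

Lemma eq_diff j k j' k' : beta j - beta k = beta j' - beta k' -> (j == k) = (j' == k').
Proof.
move=> E; rewrite -(inj_eq beta_inj) -subr_eq0 E subr_eq0.
by rewrite (inj_eq beta_inj).
Qed.

Lemma w_jj j : w j j = 0.
Proof. by rewrite /w subrr mul0mx. Qed.

Lemma one_E t : \sum_j \sum_k (N%:R^-1 * (j == k)%:R) * e2pi (dotR (w j k) t) = 1 :> R[i].
Proof.
transitivity (\sum_(j < N) (N%:R^-1 : R[i])).
  apply: eq_bigr => j _.
  transitivity (\sum_k (N%:R^-1 * e2pi (dotR (w j k) t)) * (j == k)%:R).
    by apply: eq_bigr => k _; rewrite mulrAC.
  by rewrite sum_deltaC w_jj dotR0l e2pi0 mulr1.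
rewrite sumr_const card_ord -(mulr_natl (N%:R^-1 : R[i]) N). by rewrite mulfV ?Nr_neq0.
Qed.

Lemma ii_iff : (forall t : 'rV[R]_d,
           \sum_(l <- L) `|alpha l| ^+ 2
              * `|mB B ((t - intv R l) *m M)| ^+ 2 = 1) <-> Cond.
Proof.
split; last first.
  move=> HC t; rewrite F_E -[RHS](one_E t); apply: eq_bigr => j _; apply: eq_bigr => k _.
  rewrite HC; congr (_ * _); field; exact: Nr_neq0.
move=> H.
pose c (p : 'I_N * 'I_N) := N%:R^-1 ^+ 2 * G p.1 p.2 - N%:R^-1 * (p.1 == p.2)%:R.
have E t : \sum_(p in predT) c p * e2pi (dotR (w p.1 p.2) t) = 0.
  have HF := H t; rewrite F_E in HF.
  transitivity (\sum_j \sum_k c (j, k) * e2pi (dotR (w j k) t)).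
    rewrite pair_big /=; apply: eq_big => [p|[j k] _] //.
  transitivity ((\sum_j \sum_k (N%:R^-1 ^+ 2 * G j k) * e2pi (dotR (w j k) t))
     - \sum_j \sum_k (N%:R^-1 * (j == k)%:R) * e2pi (dotR (w j k) t)); last first.
    by rewrite HF one_E subrr.
  rewrite -sumrB; apply: eq_bigr => j _.
  by rewrite -sumrB; apply: eq_bigr => k _; rewrite mulrBl.
move=> j k.
have := @lin_indep R d #|predT| _ predT c (fun p => w p.1 p.2) (leqnn _) E (j, k) isT.
rewrite /=.
have -> : \sum_(p in predT | w p.1 p.2 == w j k) c p =
          \sum_(p in predT | w p.1 p.2 == w j k) c (j, k).
  apply: eq_bigr => p /andP [_ /eqP /w_eq Hp].
  by rewrite /c /= (G_diff _ _ _ _ Hp) (eq_diff _ _ _ _ Hp).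
rewrite sumr_const => /eqP; rewrite mulrn_eq0 => /orP [].
  move=> /eqP Hc; have := card0_eq Hc (j, k); rewrite [X in _ = X]inE => Hf.
  suff : false by []. rewrite -Hf; exact: eqxx.
rewrite /c /= subr_eq0 => /eqP HG.
have -> : G j k = N%:R ^+ 2 * (N%:R^-1 ^+ 2 * G j k) by field; exact: Nr_neq0.
rewrite HG; field; exact: Nr_neq0.
Qed.

Definition xp j := beta j *m M^T.
Lemma xp_inj : injective xp.
Proof.
move=> j k; rewrite /xp => /(congr1 (mulmx^~ (invmx M^T))).
rewrite !mulmxK ?Mt_unit //; exact: beta_inj.
Qed.

Lemma ipE v l : ip_dB A B v (fun x => alpha l * e_ (intv R l) x) =
  N%:R^-1 * \sum_j v (xp j) * conjc (alpha l) *
     e2pi (- dotR (intv R l *m M) (beta j)).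
Proof.
rewrite /ip_dB sumB; congr (_ * _); apply: eq_bigr => j _.
rewrite conjE conjcM /e_ e2piN -/(beta j) -/(xp j) /xp dotRmx trmxK.
by rewrite mulrA.
Qed.

Lemma ipvv v : ip_dB A B v v = N%:R^-1 * \sum_j v (xp j) * conjc (v (xp j)).
Proof.
by rewrite /ip_dB sumB; congr (_ * _); apply: eq_bigr => j _; rewrite conjE.
Qed.

Lemma PF_form v : \sum_(l <- L) `|ip_dB A B v (fun x => alpha l * e_ (intv R l) x)| ^+ 2
  = N%:R^-1 ^+ 2 * \sum_j \sum_k v (xp j) * conjc (v (xp k)) * G j k.
Proof.
transitivity (\sum_(l <- L) \sum_j \sum_k (N%:R^-1 ^+ 2 * (v (xp j) * conjc (v (xp k))) *
  (`|alpha l| ^+ 2 * e2pi (dotR (intv R l *m M) (beta k) - dotR (intv R l *m M) (beta j))))).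
  apply: eq_bigr => l _.
  rewrite ipE normsq conjcM conjc_inv conjc_nat conjc_sum mulrACA -expr2 mulr_suml mulr_sumr.
  apply: eq_bigr => j _; rewrite mulr_sumr mulr_sumr; apply: eq_bigr => k _.
  rewrite !conjcM conjcK e2piN opprK normsq [e2pi (_ - _)]e2piD.
  ring.
rewrite exchange_big mulr_sumr; apply: eq_bigr => j _.
rewrite exchange_big mulr_sumr; apply: eq_bigr => k _.
rewrite /G !mulr_sumr; apply: eq_bigr => l _.
ring.
Qed.

Lemma delta_form (u : 'I_N -> R[i]) :
  \sum_j \sum_k u j * conjc (u k) * (N%:R * (j == k)%:R) = N%:R * \sum_j u j * conjc (u j).
Proof.
rewrite mulr_sumr; apply: eq_bigr => j _.
transitivity (\sum_k (N%:R * (u j * conjc (u k))) * (j == k)%:R).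
  by apply: eq_bigr => k _; ring.
by rewrite sum_deltaC.
Qed.

Lemma iii_iff : parseval_frame_dB A B L alpha <-> Cond.
Proof.
split.
- move=> PF.
  have key : forall u : 'I_N -> R[i],
      \sum_j \sum_k u j * conjc (u k) * (G j k - N%:R * (j == k)%:R) = 0.
    move=> u; pose v x := \sum_m u m * (x == xp m)%:R.
    have vE j : v (xp j) = u j.
      rewrite /v (eq_bigr (fun m => u m * (j == m)%:R)) ?sum_deltaC //.
      by move=> m _; rewrite (inj_eq xp_inj).
    have := PF v; rewrite PF_form ipvv.
    have -> : \sum_j \sum_k v (xp j) * conjc (v (xp k)) * G j k =
              \sum_j \sum_k u j * conjc (u k) * G j k.
      by apply: eq_bigr => j _; apply: eq_bigr => k _; rewrite !vE.
    have -> : \sum_j v (xp j) * conjc (v (xp j)) = \sum_j u j * conjc (u j).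
      by apply: eq_bigr => j _; rewrite !vE.
    move=> HX.
    transitivity (\sum_j \sum_k u j * conjc (u k) * G j k -
                  \sum_j \sum_k u j * conjc (u k) * (N%:R * (j == k)%:R)).
      rewrite -sumrB; apply: eq_bigr => j _.
      by rewrite -sumrB; apply: eq_bigr => k _; rewrite mulrBr.
    rewrite delta_form.
    have -> : \sum_j \sum_k u j * conjc (u k) * G j k =
      N%:R ^+ 2 * (N%:R^-1 ^+ 2 * \sum_j \sum_k u j * conjc (u k) * G j k).
      by field; exact: Nr_neq0.
    rewrite HX; field; exact: Nr_neq0.
  move=> j k; apply/eqP; rewrite -subr_eq0; apply/eqP; exact: (@polar R N _ key j k).
- move=> HC v; rewrite /parseval_frame_dB PF_form ipvv.
  have -> : \sum_j \sum_k v (xp j) * conjc (v (xp k)) * G j k =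
    \sum_j \sum_k v (xp j) * conjc (v (xp k)) * (N%:R * (j == k)%:R).
    by apply: eq_bigr => j _; apply: eq_bigr => k _; rewrite HC.
  have := delta_form (fun j => v (xp j)); rewrite /= => ->.
  field; exact: Nr_neq0.
Qed.
End Main.

Theorem proposition3p5 (R : realType) (d : nat) (A : 'M[int]_d)
  (B L : seq 'rV[int]_d) (alpha : 'rV[int]_d -> R[i]) :
  expansive R A ->
  uniq B -> 0 \in B ->
  uniq L -> 0 \in L ->
  [/\ (orthonormal_columns (Tmat A B L alpha) <->
        (forall t : 'rV[R]_d,
           \sum_(l <- L) `|alpha l| ^+ 2
              * `|mB B ((t - intv R l) *m invmx (intm R A))| ^+ 2 = 1)),
      ((forall t : 'rV[R]_d,
           \sum_(l <- L) `|alpha l| ^+ 2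
              * `|mB B ((t - intv R l) *m invmx (intm R A))| ^+ 2 = 1) <->
        parseval_frame_dB A B L alpha) &
      (parseval_frame_dB A B L alpha <-> orthonormal_columns (Tmat A B L alpha))].
Proof.
move=> hA uB B0 uL L0.
have uA := @unitA R d A hA.
have h1 := @orth_iff R d A B L alpha B0.
have h2 := @ii_iff R d A B L alpha uA uB B0.
have h3 := @iii_iff R d A B L alpha uA uB B0.
split.
- exact: (iff_trans h1 (iff_sym h2)).
- exact: (iff_trans h2 (iff_sym h3)).
- exact: (iff_trans h3 (iff_sym h1)).
Qed.
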